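(* Let $\Phi:[a,b]\to\mathbb{C}$ be continuous and nowhere zero. For integers $n,m\ge1$ and $x_0,x\in[a,b]$, $$\big((\Phi X^{(2n-1)})\star X^{(2m)}\big)(x_0,x)=A_{n,m}X^{(2n+2m)}(x_0,x),\qquad \Big(\big(\tfrac{1}{\Phi}\widetilde X^{(2n-1)}\big)\star\widetilde X^{(2m)}\Big)(x_0,x)=A_{n,m}\widetilde X^{(2n+2m)}(x_0,x),$$ $$\big((\Phi X^{(2n-1)})\star X^{(2m-1)}\big)(x_0,x)=B_{n,m}X^{(2n+2m-1)}(x_0,x),\qquad \Big(\big(\tfrac{1}{\Phi}\widetilde X^{(2n-1)}\big)\star\widetilde X^{(2m-1)}\Big)(x_0,x)=B_{n,m}\widetilde X^{(2n+2m-1)}(x_0,x),$$ where $A_{n,m}=\frac{(2n-1)!(2m)!}{(2n+2m)!}$ and $B_{n,m}=\frac{(2n-1)!(2m-1)!}{(2n+2m-1)!}$.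
   Context: For $s,x\in[a,b]$ the $\Phi$-power functions are defined recursively by $X^{(0)}(s,x)\equiv 1$, $\widetilde X^{(0)}(s,x)\equiv 1$ and, for $n\ge 1$, $$X^{(n)}(s,x)=n\int_{s}^x X^{(n-1)}(s,\xi)\,\big(\Phi(\xi)\big)^{(-1)^n}\,d\xi,\qquad \widetilde X^{(n)}(s,x)=n\int_{s}^x \widetilde X^{(n-1)}(s,\xi)\,\Big(\frac{1}{\Phi(\xi)}\Big)^{(-1)^n}\,d\xi.$$ The Volterra composition (of the first type) of two-variable functions is $(f\star g)(x,y)=\int_x^y f(x,\xi)\,g(\xi,y)\,d\xi$. Here $\Phi X^{(k)}$ denotes the two-variable function $(s,x)\mapsto\Phi(x)X^{(k)}(s,x)$ and $\frac1\Phi\widetilde X^{(k)}$ denotes $(s,x)\mapsto\frac{1}{\Phi(x)}\widetilde X^{(k)}(s,x)$. *)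

(* Defs.v *)
From Stdlib Require Import Reals Arith Factorial.
From Coquelicot Require Import Coquelicot.
Open Scope R_scope.

Definition CRInt (f : R -> C) (a b : R) : C :=
  (RInt (fun t => Re (f t)) a b, RInt (fun t => Im (f t)) a b).

Definition signpow (n : nat) (z : C) : C :=
  if Nat.even n then z else Cinv z.

Fixpoint Xpow (Phi : R -> C) (n : nat) (s x : R) : C :=
  match n with
  | O => RtoC 1
  | S k => Cmult (RtoC (INR (S k)))
             (CRInt (fun xi => Cmult (Xpow Phi k s xi) (signpow (S k) (Phi xi))) s x)
  end.

Definition Xtilde (Phi : R -> C) (n : nat) (s x : R) : C :=
  Xpow (fun t => Cinv (Phi t)) n s x.

Definition volterra (f g : R -> R -> C) (x y : R) : C :=
  CRInt (fun xi => Cmult (f x xi) (g xi y)) x y.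

Definition A_coef (n m : nat) : R :=
  INR (fact (2*n-1)) * INR (fact (2*m)) / INR (fact (2*n+2*m)).
Definition B_coef (n m : nat) : R :=
  INR (fact (2*n-1)) * INR (fact (2*m-1)) / INR (fact (2*n+2*m-1)).

(* Main.v *)
Require Import Defs.
From Stdlib Require Import Reals Lra Lia Arith Factorial.
From Coquelicot Require Import Coquelicot.
Open Scope R_scope.


Definition ccont (f : R -> C) := forall t,
  continuity_pt (fun u => fst (f u)) t /\ continuity_pt (fun u => snd (f u)) t.

Lemma cp2c f t : continuity_pt f t -> continuous f t.
Proof. intro H. now apply continuity_pt_filterlim. Qed.

Lemma ccont_const c : ccont (fun _ => c).
Proof. intro t; split; apply continuity_pt_const; intros ? ?; reflexivity. Qed.

Lemma ccont_plus f g : ccont f -> ccont g -> ccont (fun t => Cplus (f t) (g t)).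
Proof. intros Hf Hg t; destruct (Hf t), (Hg t); simpl; split;
  now apply continuity_pt_plus. Qed.

Lemma ccont_opp f : ccont f -> ccont (fun t => Copp (f t)).
Proof. intros Hf t; destruct (Hf t); simpl; split;
  now apply continuity_pt_opp. Qed.

Lemma ccont_mult f g : ccont f -> ccont g -> ccont (fun t => Cmult (f t) (g t)).
Proof. intros Hf Hg t; destruct (Hf t), (Hg t); simpl; split.
  apply continuity_pt_minus; now apply continuity_pt_mult.
  apply continuity_pt_plus; now apply continuity_pt_mult. Qed.

Lemma ccont_inv f : ccont f -> (forall t, f t <> RtoC 0) -> ccont (fun t => Cinv (f t)).
Proof. intros Hf Hnz t; destruct (Hf t) as [H1 H2]; simpl.
  assert (Hd : fst (f t) ^ 2 + snd (f t) ^ 2 <> 0).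
  { intro E. apply (Hnz t). destruct (f t) as [x y]; simpl in *.
    assert (x = 0) by nra. assert (y = 0) by nra. subst; reflexivity. }
  assert (Hc : continuity_pt (fun u => fst (f u) ^ 2 + snd (f u) ^ 2) t).
  { apply continuity_pt_plus; simpl; repeat apply continuity_pt_mult; auto;
    apply continuity_pt_const; intros ? ?; reflexivity. }
  split; unfold Rdiv.
  - apply continuity_pt_mult; auto. apply continuity_pt_inv; auto.
  - apply continuity_pt_mult; auto. apply continuity_pt_opp; auto. apply continuity_pt_inv; auto.
Qed.

Lemma ccont_ext f g : (forall t, f t = g t) -> ccont f -> ccont g.
Proof. intros E Hf t; destruct (Hf t); split.
  - apply (continuity_pt_ext (fun u => fst (f u))); auto; intro; now rewrite E.
  - apply (continuity_pt_ext (fun u => snd (f u))); auto; intro; now rewrite E. Qed.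

Lemma ccont_ex1 f a b : ccont f -> ex_RInt (fun u => fst (f u)) a b.
Proof. intro H; apply (ex_RInt_continuous (V:=R_CompleteNormedModule)); intros z _; apply cp2c, H. Qed.
Lemma ccont_ex2 f a b : ccont f -> ex_RInt (fun u => snd (f u)) a b.
Proof. intro H; apply (ex_RInt_continuous (V:=R_CompleteNormedModule)); intros z _; apply cp2c, H. Qed.

Lemma CRInt_ext f g a b : (forall t, Rmin a b < t < Rmax a b -> f t = g t) ->
  CRInt f a b = CRInt g a b.
Proof. intro E; unfold CRInt; f_equal; apply RInt_ext; intros; simpl; now rewrite E. Qed.

Lemma CRInt_extw f g a b : (forall t, f t = g t) -> CRInt f a b = CRInt g a b.
Proof. intro E; apply CRInt_ext; auto. Qed.

Lemma CRInt_plus f g a b : ccont f -> ccont g ->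
  CRInt (fun t => Cplus (f t) (g t)) a b = Cplus (CRInt f a b) (CRInt g a b).
Proof. intros Hf Hg; unfold CRInt, Cplus; simpl; f_equal;
  apply (RInt_plus (V:=R_CompleteNormedModule)); auto using ccont_ex1, ccont_ex2. Qed.

Lemma CRInt_opp f a b : ccont f ->
  CRInt (fun t => Copp (f t)) a b = Copp (CRInt f a b).
Proof. intros Hf; unfold CRInt, Copp; simpl; f_equal;
  apply (RInt_opp (V:=R_CompleteNormedModule)); auto using ccont_ex1, ccont_ex2. Qed.

Lemma CRInt_scal (k : C) f a b : ccont f ->
  CRInt (fun t => Cmult k (f t)) a b = Cmult k (CRInt f a b).
Proof. intros Hf; unfold CRInt, Cmult; simpl; f_equal.
  - rewrite (RInt_minus (V:=R_CompleteNormedModule)).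
    rewrite !(RInt_scal (V:=R_CompleteNormedModule)); auto using ccont_ex1, ccont_ex2.
    apply (ex_RInt_scal (V:=R_CompleteNormedModule)); auto using ccont_ex1, ccont_ex2.
    apply (ex_RInt_scal (V:=R_CompleteNormedModule)); auto using ccont_ex1, ccont_ex2.
  - rewrite (RInt_plus (V:=R_CompleteNormedModule)).
    rewrite !(RInt_scal (V:=R_CompleteNormedModule)); auto using ccont_ex1, ccont_ex2.
    apply (ex_RInt_scal (V:=R_CompleteNormedModule)); auto using ccont_ex1, ccont_ex2.
    apply (ex_RInt_scal (V:=R_CompleteNormedModule)); auto using ccont_ex1, ccont_ex2.
Qed.

Lemma CRInt_Chasles f a b c : ccont f ->
  CRInt f a c = Cminus (CRInt f b c) (CRInt f b a).
Proof. intros Hf; unfold CRInt, Cminus, Cplus, Copp; simpl; f_equal.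
  - rewrite <- (RInt_Chasles (V:=R_CompleteNormedModule) _ b a c); auto using ccont_ex1.
    rewrite <- (opp_RInt_swap (V:=R_CompleteNormedModule)); auto using ccont_ex1.
    simpl. unfold plus, opp; simpl. ring.
  - rewrite <- (RInt_Chasles (V:=R_CompleteNormedModule) _ b a c); auto using ccont_ex2.
    rewrite <- (opp_RInt_swap (V:=R_CompleteNormedModule)); auto using ccont_ex2.
    simpl. unfold plus, opp; simpl. ring.
Qed.

Definition cderiv (F f : R -> C) := forall t,
  is_derive (fun x => fst (F x)) t (fst (f t)) /\ is_derive (fun x => snd (F x)) t (snd (f t)).

Lemma rderiv_RInt (g : R -> R) c t : (forall u, continuity_pt g u) ->
  is_derive (fun x => RInt g c x) t (g t).
Proof. intro Hg.
  apply (is_derive_RInt (V:=R_NormedModule) g (RInt g c) c t).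
  - apply filter_forall; intro y. apply (RInt_correct (V:=R_CompleteNormedModule)).
    apply (ex_RInt_continuous (V:=R_CompleteNormedModule)); intros; apply cp2c, Hg.
  - apply cp2c, Hg.
Qed.

Lemma cderiv_CRInt f c : ccont f -> cderiv (fun x => CRInt f c x) f.
Proof. intros Hf t; unfold CRInt; simpl; split; apply rderiv_RInt; intro u; apply Hf. Qed.

Lemma cderiv_ccont F f : cderiv F f -> ccont F.
Proof. intros H t; destruct (H t) as [H1 H2]; split; apply continuity_pt_filterlim;
  apply (ex_derive_continuous (K:=R_AbsRing) (V:=R_NormedModule)); eexists; eassumption. Qed.

Lemma ccont_CRInt f c : ccont f -> ccont (fun x => CRInt f c x).
Proof. intro; eapply cderiv_ccont, cderiv_CRInt; auto. Qed.

Lemma cFTC F f a b : ccont f -> cderiv F f -> CRInt f a b = Cminus (F b) (F a).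
Proof. intros Hf HF. unfold CRInt, Cminus, Cplus, Copp; simpl; f_equal.
  - apply (is_RInt_unique (V:=R_CompleteNormedModule)).
    apply (is_RInt_derive (V:=R_CompleteNormedModule) (fun x => fst (F x))).
    intros; apply HF. intros; apply cp2c, Hf.
  - apply (is_RInt_unique (V:=R_CompleteNormedModule)).
    apply (is_RInt_derive (V:=R_CompleteNormedModule) (fun x => snd (F x))).
    intros; apply HF. intros; apply cp2c, Hf.
Qed.

Lemma rd_mult (f g : R -> R) x df dg : is_derive f x df -> is_derive g x dg ->
  is_derive (fun y => f y * g y) x (df * g x + f x * dg).
Proof. intros; apply (is_derive_mult (K:=R_AbsRing)); auto. intros; apply Rmult_comm. Qed.

Lemma cderiv_mult F f G g : cderiv F f -> cderiv G g ->
  cderiv (fun x => Cmult (F x) (G x)) (fun x => Cplus (Cmult (f x) (G x)) (Cmult (F x) (g x))).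
Proof. intros HF HG t; destruct (HF t) as [F1 F2], (HG t) as [G1 G2]; simpl; split.
  - eapply is_derive_ext. intro; reflexivity.
    replace (fst (f t) * fst (G t) - snd (f t) * snd (G t) + (fst (F t) * fst (g t) - snd (F t) * snd (g t)))
     with ((fst (f t) * fst (G t) + fst (F t) * fst (g t)) - (snd (f t) * snd (G t) + snd (F t) * snd (g t))) by ring.
    apply (is_derive_minus (K:=R_AbsRing) (V:=R_NormedModule)); apply rd_mult; auto.
  - replace (fst (f t) * snd (G t) + snd (f t) * fst (G t) + (fst (F t) * snd (g t) + snd (F t) * fst (g t)))
     with ((fst (f t) * snd (G t) + fst (F t) * snd (g t)) + (snd (f t) * fst (G t) + snd (F t) * fst (g t))) by ring.
    apply (is_derive_plus (K:=R_AbsRing) (V:=R_NormedModule)); apply rd_mult; auto.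
Qed.

Fixpoint csum (f : nat -> C) (n : nat) : C :=
  match n with O => RtoC 0 | S k => Cplus (csum f k) (f k) end.

Lemma csum_ext f g n : (forall j, (j < n)%nat -> f j = g j) -> csum f n = csum g n.
Proof. induction n; simpl; intros; auto. rewrite IHn, H; auto. Qed.

Lemma csum_mult_l c f n : Cmult c (csum f n) = csum (fun j => Cmult c (f j)) n.
Proof. induction n; simpl. ring. rewrite <- IHn. ring. Qed.

Lemma csum_plus f g n : csum (fun j => Cplus (f j) (g j)) n = Cplus (csum f n) (csum g n).
Proof. induction n; simpl. ring. rewrite IHn. ring. Qed.

Lemma csum_opp f n : csum (fun j => Copp (f j)) n = Copp (csum f n).
Proof. induction n; simpl. ring. rewrite IHn. ring. Qed.

Lemma ccont_csum (f : nat -> R -> C) n : (forall j, ccont (f j)) ->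
  ccont (fun t => csum (fun j => f j t) n).
Proof. intro H; induction n; simpl. apply ccont_const. apply ccont_plus; auto. Qed.

Lemma CRInt_csum (f : nat -> R -> C) n a b : (forall j, ccont (f j)) ->
  CRInt (fun t => csum (fun j => f j t) n) a b = csum (fun j => CRInt (f j) a b) n.
Proof. intro H; induction n; simpl.
  - unfold CRInt; simpl. rewrite !RInt_const. unfold scal; simpl; unfold mult; simpl.
    unfold RtoC. f_equal; ring.
  - rewrite CRInt_plus; auto. now rewrite IHn. apply ccont_csum; auto.
Qed.

Ltac cc := repeat match goal with
 | |- ccont (fun _ => Cmult _ _) => apply ccont_mult
 | |- ccont (fun _ => Cplus _ _) => apply ccont_plus
 | |- ccont (fun _ => Copp _) => apply ccont_opp
 | |- ccont (fun _ => Cminus _ _) => unfold Cminus; apply ccont_plus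
 | |- ccont (fun _ => CRInt _ _ _) => apply ccont_CRInt
 | |- ccont (CRInt _ _) => apply ccont_CRInt
 | |- ccont (fun _ => csum _ _) => apply ccont_csum
 | |- ccont (fun _ => ?c) => apply ccont_const
 | |- ccont _ => assumption
 | H : forall _, ccont _ |- ccont _ => apply H
 | |- forall _, _ => intro
 end.

Lemma CRInt_point f a : CRInt f a a = RtoC 0.
Proof. unfold CRInt. rewrite !(RInt_point (V:=R_CompleteNormedModule)). reflexivity. Qed.

Lemma ibp p q x0 x c : ccont p -> ccont q ->
  CRInt (fun xi => Cmult (p xi) (Cminus (CRInt q c x) (CRInt q c xi))) x0 x
  = CRInt (fun eta => Cmult (q eta) (CRInt p x0 eta)) x0 x.
Proof. intros Hp Hq.
  set (P := fun t => CRInt p x0 t). set (Q := fun t => CRInt q c t).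
  assert (HP : ccont P) by (apply ccont_CRInt; auto).
  assert (HQ : ccont Q) by (apply ccont_CRInt; auto).
  assert (HpQ : ccont (fun t => Cmult (p t) (Q t))) by (apply ccont_mult; auto).
  assert (HqP : ccont (fun t => Cmult (q t) (P t))) by (apply ccont_mult; auto).
  assert (FTC : CRInt (fun t => Cplus (Cmult (p t) (Q t)) (Cmult (P t) (q t))) x0 x
     = Cminus (Cmult (P x) (Q x)) (Cmult (P x0) (Q x0))).
  { apply (cFTC (fun t => Cmult (P t) (Q t))).
    apply ccont_plus; auto. apply ccont_mult; auto.
    apply cderiv_mult; apply cderiv_CRInt; auto. }
  assert (P0 : P x0 = RtoC 0) by apply CRInt_point.
  rewrite P0 in FTC.
  rewrite (CRInt_extw _ (fun t => Cplus (Cmult (Q x) (p t)) (Copp (Cmult (p t) (Q t))))).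
  2:{ intro; fold (Q t); unfold Q; ring. }
  rewrite CRInt_plus, CRInt_opp, CRInt_scal; cc.
  rewrite (CRInt_extw (fun eta => Cmult (q eta) (CRInt p x0 eta))
     (fun t => Cplus (Cplus (Cmult (p t) (Q t)) (Cmult (P t) (q t))) (Copp (Cmult (p t) (Q t))))).
  2:{ intro; unfold P; ring. }
  rewrite CRInt_plus, CRInt_opp, FTC; cc.
  fold (P x). ring.
Qed.

Lemma csum_mult_r c f n : Cmult (csum f n) c = csum (fun j => Cmult (f j) c) n.
Proof. induction n; simpl. ring. rewrite <- IHn. ring. Qed.

Definition Bf (b : nat -> R -> C) (w : R -> C) j t := CRInt (fun u => Cmult (b j u) (w u)) 0 t.

Lemma sep_step (a b : nat -> R -> C) w N xi x :
  (forall j, ccont (b j)) -> ccont w ->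
  CRInt (fun eta => Cmult (csum (fun j => Cmult (a j xi) (b j eta)) N) (w eta)) xi x
  = csum (fun j => Cmult (a j xi) (Cminus (Bf b w j x) (Bf b w j xi))) N.
Proof. intros Hb Hw.
  rewrite (CRInt_extw _ (fun eta => csum (fun j => Cmult (a j xi) (Cmult (b j eta) (w eta))) N)).
  2:{ intro; rewrite csum_mult_r; apply csum_ext; intros; ring. }
  rewrite CRInt_csum. 2:{ intro j; apply ccont_mult. apply ccont_const. apply ccont_mult; auto. }
  apply csum_ext; intros j _.
  rewrite CRInt_scal. 2: apply ccont_mult; auto.
  unfold Bf. rewrite (CRInt_Chasles _ xi 0 x). reflexivity. apply ccont_mult; auto.
Qed.

Lemma tri_sep (g w : R -> C) (a b : nat -> R -> C) N x0 x :
  ccont g -> ccont w -> (forall j, ccont (a j)) -> (forall j, ccont (b j)) ->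
  CRInt (fun xi => Cmult (g xi) (csum (fun j => Cmult (a j xi) (Cminus (Bf b w j x) (Bf b w j xi))) N)) x0 x
  = CRInt (fun eta => Cmult (CRInt (fun xi => Cmult (g xi) (csum (fun j => Cmult (a j xi) (b j eta)) N)) x0 eta) (w eta)) x0 x.
Proof. intros Hg Hw Ha Hb.
  assert (HB : forall j, ccont (Bf b w j)).
  { intro j; unfold Bf; apply ccont_CRInt, ccont_mult; auto. }
  rewrite (CRInt_extw _ (fun xi => csum (fun j => Cmult (Cmult (g xi) (a j xi)) (Cminus (Bf b w j x) (Bf b w j xi))) N)).
  2:{ intro; rewrite csum_mult_l; apply csum_ext; intros; ring. }
  rewrite CRInt_csum.
  2:{ intro j. apply ccont_mult. apply ccont_mult; auto. unfold Cminus. apply ccont_plus.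
      apply ccont_const. apply ccont_opp; auto. }
  rewrite (CRInt_extw _ (fun eta => csum (fun j => Cmult (Cmult (b j eta) (w eta)) (CRInt (fun xi => Cmult (g xi) (a j xi)) x0 eta)) N)).
  2:{ intro eta.
      rewrite (CRInt_extw _ (fun xi => csum (fun j => Cmult (b j eta) (Cmult (g xi) (a j xi))) N)).
      2:{ intro; rewrite csum_mult_l; apply csum_ext; intros; ring. }
      rewrite CRInt_csum. 2:{ intro j; apply ccont_mult. apply ccont_const. apply ccont_mult; auto. }
      rewrite csum_mult_r. apply csum_ext; intros j _. rewrite CRInt_scal. ring.
      apply ccont_mult; auto. }
  rewrite CRInt_csum.
  2:{ intro j. apply ccont_mult. apply ccont_mult; auto. apply ccont_CRInt, ccont_mult; auto. }
  apply csum_ext; intros j _. unfold Bf. apply ibp. apply ccont_mult; auto. apply ccont_mult; auto.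
Qed.

Lemma csum_S f n : csum f (S n) = Cplus (csum f n) (f n).
Proof. reflexivity. Qed.

Lemma ccont_w Psi k : ccont Psi -> ccont (fun t => Cinv (Psi t)) ->
  ccont (fun t => signpow k (Psi t)).
Proof. intros H1 H2; unfold signpow; destruct (Nat.even k); auto. Qed.

Lemma Xpow_S Psi k s x : Xpow Psi (S k) s x =
  Cmult (RtoC (INR (S k))) (CRInt (fun xi => Cmult (Xpow Psi k s xi) (signpow (S k) (Psi xi))) s x).
Proof. reflexivity. Qed.

Lemma Xcont Psi : ccont Psi -> ccont (fun t => Cinv (Psi t)) ->
  forall k s, ccont (fun x => Xpow Psi k s x).
Proof. intros H1 H2; induction k; intro s.
  - apply (ccont_ext (fun _ => RtoC 1)); [reflexivity|apply ccont_const].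
  - apply (ccont_ext (fun x => Cmult (RtoC (INR (S k))) (CRInt (fun xi => Cmult (Xpow Psi k s xi) (signpow (S k) (Psi xi))) s x))).
    intro; reflexivity.
    pose proof (ccont_w Psi (S k) H1 H2). specialize (IHk s). cc.
Qed.

Lemma sep_X Psi : ccont Psi -> ccont (fun t => Cinv (Psi t)) ->
  forall k, exists N (a b : nat -> R -> C), (forall j, ccont (a j)) /\ (forall j, ccont (b j)) /\
    forall s x, Xpow Psi k s x = csum (fun j => Cmult (a j s) (b j x)) N.
Proof. intros H1 H2; induction k.
  - exists 1%nat, (fun _ _ => RtoC 1), (fun _ _ => RtoC 1).
    split; [intro; apply ccont_const|split; [intro; apply ccont_const|]].
    intros; simpl. ring.
  - destruct IHk as (N & a & b & Ha & Hb & E).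
    set (w := fun t => signpow (S k) (Psi t)).
    assert (Hw : ccont w) by (apply ccont_w; auto).
    set (K := RtoC (INR (S k))).
    set (Al := fun s => Copp (Cmult K (csum (fun i => Cmult (a i s) (Bf b w i s)) N))).
    assert (HB : forall j, ccont (Bf b w j)).
    { intro j; unfold Bf; apply ccont_CRInt, ccont_mult; auto. }
    exists (S N), (fun j => if Nat.ltb j N then a j else Al),
      (fun j => if Nat.ltb j N then (fun t => Cmult K (Bf b w j t)) else (fun _ => RtoC 1)).
    split; [|split].
    + intro j; destruct (Nat.ltb j N); auto. unfold Al. cc.
    + intro j; destruct (Nat.ltb j N). cc. apply ccont_const.
    + intros s x. rewrite Xpow_S.
      rewrite (CRInt_extw _ (fun eta => Cmult (csum (fun j => Cmult (a j s) (b j eta)) N) (w eta))).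
      2:{ intro; rewrite E; reflexivity. }
      rewrite sep_step; auto. rewrite csum_S.
      simpl (N <? N). rewrite Nat.ltb_irrefl.
      rewrite (csum_ext (fun j => Cmult ((if Nat.ltb j N then a j else Al) s)
         ((if Nat.ltb j N then (fun t => Cmult K (Bf b w j t)) else (fun _ => RtoC 1)) x))
         (fun j => Cmult (a j s) (Cmult K (Bf b w j x)))).
      2:{ intros j Hj. apply Nat.ltb_lt in Hj. rewrite Hj. reflexivity. }
      fold K. unfold Al.
      rewrite !csum_mult_l.
      rewrite (csum_ext (fun j => Cmult K (Cmult (a j s) (Cminus (Bf b w j x) (Bf b w j s))))
        (fun j => Cplus (Cmult (a j s) (Cmult K (Bf b w j x))) (Copp (Cmult K (Cmult (a j s) (Bf b w j s)))))).
      2:{ intros; ring. }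
      rewrite csum_plus, csum_opp. ring.
Qed.

Definition cc_ p k := INR (fact p) * INR (fact k) / INR (fact (S p + k)).

Lemma signpow_shift p j z : Nat.even (S p) = true -> signpow (S p + j) z = signpow j z.
Proof. intro H; unfold signpow; rewrite Nat.even_add, H; destruct (Nat.even j); reflexivity. Qed.

Lemma Ins Psi : ccont Psi -> ccont (fun t => Cinv (Psi t)) ->
  forall p x0, Nat.even (S p) = true -> forall k x,
  CRInt (fun xi => Cmult (Cmult (Psi xi) (Xpow Psi p x0 xi)) (Xpow Psi k xi x)) x0 x
  = Cmult (RtoC (cc_ p k)) (Xpow Psi (S p + k) x0 x).
Proof. intros H1 H2 p x0 Hp.
  assert (HX := Xcont Psi H1 H2).
  set (g := fun xi => Cmult (Psi xi) (Xpow Psi p x0 xi)).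
  assert (Hg : ccont g) by (unfold g; pose proof (HX p x0); cc).
  induction k; intro x.
  - rewrite Nat.add_0_r, Xpow_S.
    rewrite (CRInt_extw _ (fun xi => Cmult (Xpow Psi p x0 xi) (signpow (S p) (Psi xi)))).
    2:{ intro; unfold signpow; rewrite Hp. simpl Xpow. ring. }
    rewrite Cmult_assoc, <- RtoC_mult.
    replace (cc_ p 0 * INR (S p)) with 1. ring.
    unfold cc_. rewrite Nat.add_0_r. simpl (fact 0). change (fact (S p)) with (S p * fact p)%nat.
    rewrite mult_INR. simpl (INR 1). field. split; [apply INR_fact_neq_0|]. apply not_0_INR; lia.
  - destruct (sep_X Psi H1 H2 k) as (N & a & b & Ha & Hb & E).
    set (w := fun t => signpow (S k) (Psi t)).
    assert (Hw : ccont w) by (apply ccont_w; auto).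
    set (K := RtoC (INR (S k))).
    assert (HB : forall j, ccont (Bf b w j)).
    { intro j; unfold Bf; apply ccont_CRInt, ccont_mult; auto. }
    rewrite (CRInt_extw _ (fun xi => Cmult K (Cmult (g xi) (csum (fun j => Cmult (a j xi) (Cminus (Bf b w j x) (Bf b w j xi))) N)))).
    2:{ intro xi. rewrite Xpow_S.
        rewrite (CRInt_extw _ (fun eta => Cmult (csum (fun j => Cmult (a j xi) (b j eta)) N) (w eta))).
        2:{ intro; rewrite E; reflexivity. }
        rewrite sep_step; auto. unfold g, K. ring. }
    rewrite CRInt_scal; cc.
    rewrite tri_sep; auto.
    rewrite (CRInt_extw _ (fun eta => Cmult (RtoC (cc_ p k)) (Cmult (Xpow Psi (S p + k) x0 eta) (w eta)))).
    2:{ intro eta. rewrite Cmult_assoc. f_equal. rewrite <- IHk. apply CRInt_extw; intro xi. rewrite E; reflexivity. }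
    rewrite CRInt_scal. 2:{ pose proof (HX (S p + k)%nat x0). cc. }
    rewrite Nat.add_succ_r, Xpow_S.
    rewrite (CRInt_extw (fun xi => Cmult (Xpow Psi (S p + k) x0 xi) (signpow (S (S p + k)) (Psi xi)))
       (fun eta => Cmult (Xpow Psi (S p + k) x0 eta) (w eta))).
    2:{ intro; unfold w. replace (S (S p + k)) with (S p + S k)%nat by lia. rewrite signpow_shift; auto. }
    unfold K. rewrite !Cmult_assoc, <- !RtoC_mult.
    replace (INR (S k) * cc_ p k) with (cc_ p (S k) * INR (S (S p + k))). reflexivity.
    unfold cc_. replace (S p + S k)%nat with (S (S p + k)) by lia.
    change (fact (S k)) with (S k * fact k)%nat.
    change (fact (S (S p + k))) with (S (S p + k) * fact (S p + k))%nat.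
    rewrite !mult_INR. field. split; [apply INR_fact_neq_0|]. apply not_0_INR; lia.
Qed.

Lemma Xpow_agree (F G : R -> C) a b : (forall t, a <= t <= b -> F t = G t) ->
  forall k s x, a <= s <= b -> a <= x <= b -> Xpow F k s x = Xpow G k s x.
Proof. intros HFG; induction k; intros s x Hs Hx; [reflexivity|].
  rewrite !Xpow_S; f_equal. apply CRInt_ext; intros t Ht.
  assert (a <= t <= b) by (unfold Rmin, Rmax in Ht; destruct Rle_dec; lra).
  rewrite IHk, HFG; auto.
Qed.

Lemma part (F G : R -> C) a b : (forall t, a <= t <= b -> F t = G t) ->
  ccont G -> ccont (fun t => Cinv (G t)) ->
  forall p q x0 x, a <= x0 <= b -> a <= x <= b -> Nat.even (S p) = true ->
  CRInt (fun xi => Cmult (Cmult (F xi) (Xpow F p x0 xi)) (Xpow F q xi x)) x0 x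
  = Cmult (RtoC (cc_ p q)) (Xpow F (S p + q) x0 x).
Proof. intros HFG H1 H2 p q x0 x Hx0 Hx Hp.
  rewrite (Xpow_agree F G a b HFG); auto.
  rewrite <- Ins; auto. apply CRInt_ext; intros t Ht.
  assert (a <= t <= b) by (unfold Rmin, Rmax in Ht; destruct Rle_dec; lra).
  rewrite HFG, !(Xpow_agree F G a b HFG); auto.
Qed.

Definition clamp a b t := Rmax a (Rmin b t).

Lemma clamp_in a b t : a <= b -> a <= clamp a b t <= b.
Proof. intro; unfold clamp, Rmax, Rmin; repeat destruct Rle_dec; lra. Qed.

Lemma clamp_id a b t : a <= t <= b -> clamp a b t = t.
Proof. intro; unfold clamp, Rmax, Rmin; repeat destruct Rle_dec; lra. Qed.

Lemma clamp_lip a b u v : a <= b -> Rabs (clamp a b u - clamp a b v) <= Rabs (u - v).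
Proof. intro; unfold clamp, Rmax, Rmin; repeat destruct Rle_dec;
  unfold Rabs; repeat destruct Rcase_abs; lra. Qed.

Lemma clamp_cont a b t : a <= b ->
  filterlim (clamp a b) (locally t) (within (fun y => a <= y <= b) (locally (clamp a b t))).
Proof. intros Hab P HP. unfold within in HP. unfold filtermap.
  destruct HP as [eps He]. exists eps. intros u Hu. apply He.
  2: apply clamp_in; auto.
  unfold ball in *; simpl in *; unfold AbsRing_ball, abs, minus, plus, opp in *; simpl in *.
  eapply Rle_lt_trans; [apply clamp_lip; auto|]. auto.
Qed.

Lemma ccont_of (Psi : R -> C) : (forall t, filterlim Psi (locally t) (locally (Psi t))) -> ccont Psi.
Proof. intros H t; split; apply continuity_pt_filterlim.
  - apply (filterlim_comp _ _ _ Psi fst _ (locally (Psi t))); auto.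
    apply (continuous_fst (U:=R_UniformSpace) (V:=R_UniformSpace)).
  - apply (filterlim_comp _ _ _ Psi snd _ (locally (Psi t))); auto.
    apply (continuous_snd (U:=R_UniformSpace) (V:=R_UniformSpace)).
Qed.

Theorem proposition5 (a b : R) (Phi : R -> C)
  (Hcont : forall t, a <= t <= b ->
     filterlim Phi (within (fun y => a <= y <= b) (locally t)) (locally (Phi t)))
  (Hnz : forall t, a <= t <= b -> Phi t <> RtoC 0)
  (n m : nat) (Hn : (1 <= n)%nat) (Hm : (1 <= m)%nat)
  (x0 x : R) (Hx0 : a <= x0 <= b) (Hx : a <= x <= b) :
  volterra (fun s t => Cmult (Phi t) (Xpow Phi (2*n-1) s t)) (Xpow Phi (2*m)) x0 x
    = Cmult (RtoC (A_coef n m)) (Xpow Phi (2*n+2*m) x0 x)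
  /\ volterra (fun s t => Cmult (Cinv (Phi t)) (Xtilde Phi (2*n-1) s t)) (Xtilde Phi (2*m)) x0 x
    = Cmult (RtoC (A_coef n m)) (Xtilde Phi (2*n+2*m) x0 x)
  /\ volterra (fun s t => Cmult (Phi t) (Xpow Phi (2*n-1) s t)) (Xpow Phi (2*m-1)) x0 x
    = Cmult (RtoC (B_coef n m)) (Xpow Phi (2*n+2*m-1) x0 x)
  /\ volterra (fun s t => Cmult (Cinv (Phi t)) (Xtilde Phi (2*n-1) s t)) (Xtilde Phi (2*m-1)) x0 x
    = Cmult (RtoC (B_coef n m)) (Xtilde Phi (2*n+2*m-1) x0 x).
Proof.
  assert (Hab : a <= b) by lra.
  set (Psi := fun t => Phi (clamp a b t)).
  assert (HPsi : forall t, a <= t <= b -> Phi t = Psi t).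
  { intros t Ht; unfold Psi; rewrite clamp_id; auto. }
  assert (Hnz' : forall t, Psi t <> RtoC 0) by (intro t; apply Hnz, clamp_in; auto).
  assert (H1 : ccont Psi).
  { apply ccont_of; intro t. unfold Psi.
    apply (filterlim_comp _ _ _ (clamp a b) Phi _ (within (fun y => a <= y <= b) (locally (clamp a b t)))).
    apply clamp_cont; auto. apply Hcont, clamp_in; auto. }
  assert (H2 : ccont (fun t => Cinv (Psi t))) by (apply ccont_inv; auto).
  assert (Hinz : forall t, Cinv (Psi t) <> RtoC 0).
  { intros t E. apply (Hnz' t). rewrite <- (Cmult_1_l (Psi t)), <- (Cinv_l (Psi t)), E by auto. ring. }
  assert (H3 : ccont (fun t => Cinv (Cinv (Psi t)))) by (apply (ccont_inv (fun t => Cinv (Psi t))); auto).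
  assert (HPsi' : forall t, a <= t <= b -> Cinv (Phi t) = Cinv (Psi t)).
  { intros; rewrite HPsi; auto. }
  assert (Hev : Nat.even (S (2*n-1)) = true).
  { replace (S (2*n-1)) with (2*n)%nat by lia. apply Nat.even_mul. }
  assert (EA : A_coef n m = cc_ (2*n-1) (2*m)).
  { unfold A_coef, cc_. now replace (S (2*n-1) + 2*m)%nat with (2*n+2*m)%nat by lia. }
  assert (EB : B_coef n m = cc_ (2*n-1) (2*m-1)).
  { unfold B_coef, cc_. now replace (S (2*n-1) + (2*m-1))%nat with (2*n+2*m-1)%nat by lia. }
  unfold volterra, Xtilde.
  replace (2*n+2*m-1)%nat with (S (2*n-1) + (2*m-1))%nat by lia.
  replace (2*n+2*m)%nat with (S (2*n-1) + 2*m)%nat by lia.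
  rewrite EA, EB.
  split; [|split; [|split]].
  - exact (part Phi Psi a b HPsi H1 H2 _ _ x0 x Hx0 Hx Hev).
  - exact (part (fun t => Cinv (Phi t)) (fun t => Cinv (Psi t)) a b HPsi' H2 H3 _ _ x0 x Hx0 Hx Hev).
  - exact (part Phi Psi a b HPsi H1 H2 _ _ x0 x Hx0 Hx Hev).
  - exact (part (fun t => Cinv (Phi t)) (fun t => Cinv (Psi t)) a b HPsi' H2 H3 _ _ x0 x Hx0 Hx Hev).
Qed.
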